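(* Let $(K,\mathscr T)$ be a stable topological space and $f:K\to L^0$ a stable lower semi-continuous function. If $K$ is stable compact, then there exists $x_0\in K$ such that $f(x_0)=\min_{x\in K}f(x)$, i.e. $f(x_0)\le f(x)$ for all $x\in K$.
   Context: $L^0$: real measurable functions on a probability space modulo a.e. equality, a.e. order; $\bar L^0$ the corresponding extended-real-valued classes. An $L^0$-module $E$ is stable if for every countable measurable partition $(A_k)$ and $(x_k)\subset E$ there is a unique $x=\sum_k1_{A_k}x_k$ with $1_{A_k}x=1_{A_k}x_k$. A nonempty subset is stable if closed under concatenations; for stable $Y_k$, $\sum_k1_{A_k}Y_k=\{\sum_k1_{A_k}y_k:y_k\in Y_k\}$; a nonempty collection of stable sets is stable if closed under this operation. A stable topological space is a stable subset $K$ of a stable $L^0$-module with a topology having a base which is a stable collection of stable sets. $f$ is stable if $f(\sum_k1_{A_k}x_k)=\sum_k1_{A_k}f(x_k)$; lower semi-continuous if $\{x\in K:f(x)\le\eta\}$ is closed for every $\eta\in\bar L^0$. A filter is stable if it has a filter base which is a stable collection of stable sets; $K$ is stable compact if every stable filter on $K$ has a cluster point in $K$. *)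

(* Defs.v *)
From Stdlib Require Import Reals.
Open Scope R_scope.

Record ProbSpace := {
  Omega : Type;
  meas : (Omega -> Prop) -> Prop;
  meas_full : meas (fun _ => True);
  meas_compl : forall A, meas A -> meas (fun w => ~ A w);
  meas_union : forall A : nat -> Omega -> Prop,
      (forall n, meas (A n)) -> meas (fun w => exists n, A n w);
  prob : (Omega -> Prop) -> R;
  prob_nonneg : forall A, meas A -> 0 <= prob A;
  prob_full : prob (fun _ => True) = 1;
  prob_sigma_add : forall A : nat -> Omega -> Prop,
      (forall n, meas (A n)) ->
      (forall n m w, n <> m -> A n w -> A m w -> False) ->
      infinite_sum (fun n => prob (A n)) (prob (fun w => exists n, A n w))
}.

Section L0.
Variable Ps : ProbSpace.
Notation Om := (Omega Ps).

Definition ae (p : Om -> Prop) : Prop :=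
  exists N, meas Ps N /\ prob Ps N = 0 /\ forall w, ~ N w -> p w.

Definition measurable_fun (X : Om -> R) : Prop :=
  forall a : R, meas Ps (fun w => X w <= a).

Inductive Rbar := Finite (r : R) | p_infty | m_infty.
Definition Rbar_le (x y : Rbar) : Prop :=
  match x, y with
  | m_infty, _ => True
  | _, p_infty => True
  | p_infty, _ => False
  | _, m_infty => False
  | Finite a, Finite b => a <= b
  end.

Definition measurable_rbar (X : Om -> Rbar) : Prop :=
  forall a : R, meas Ps (fun w => Rbar_le (X w) (Finite a)).

(** L^0 : equivalence classes of measurable real functions modulo a.e. equality *)
Definition is_L0_class (S : (Om -> R) -> Prop) : Prop :=
  exists X, measurable_fun X /\
    forall Y, S Y <-> (measurable_fun Y /\ ae (fun w => X w = Y w)).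

Definition L0 := { S : (Om -> R) -> Prop | is_L0_class S }.

Definition represents (c : L0) (X : Om -> R) : Prop := proj1_sig c X.

Definition L0_le (c d : L0) : Prop :=
  exists X Y, represents c X /\ represents d Y /\ ae (fun w => X w <= Y w).

(** a.e. comparison of an element of L^0 with an element of \bar L^0
    (given by any measurable extended-real representative) *)
Definition L0_le_bar (c : L0) (eta : Om -> Rbar) : Prop :=
  exists X, represents c X /\ ae (fun w => Rbar_le (Finite (X w)) (eta w)).

Definition L0_add_rel (a b c : L0) : Prop :=
  exists X Y Z, represents a X /\ represents b Y /\ represents c Z /\
    forall w, Z w = X w + Y w.
Definition L0_mul_rel (a b c : L0) : Prop :=
  exists X Y Z, represents a X /\ represents b Y /\ represents c Z /\
    forall w, Z w = X w * Y w.
Definition L0_is_one (o : L0) : Prop := represents o (fun _ => 1).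

Definition is_ind (A : Om -> Prop) (c : L0) : Prop :=
  exists X, represents c X /\ forall w, (A w -> X w = 1) /\ (~ A w -> X w = 0).

Definition partition (A : nat -> Om -> Prop) : Prop :=
  (forall k, meas Ps (A k)) /\
  (forall k l w, k <> l -> A k w -> A l w -> False) /\
  (forall w, exists k, A k w).

Record StableL0Module := {
  E : Type;
  add : E -> E -> E;
  zero : E;
  opp : E -> E;
  smul : L0 -> E -> E;
  addA : forall x y z, add x (add y z) = add (add x y) z;
  addC : forall x y, add x y = add y x;
  add0 : forall x, add zero x = x;
  addN : forall x, add (opp x) x = zero;
  smulDr : forall a x y, smul a (add x y) = add (smul a x) (smul a y);
  smulDl : forall a b c x, L0_add_rel a b c -> smul c x = add (smul a x) (smul b x);
  smulA : forall a b c x, L0_mul_rel a b c -> smul c x = smul a (smul b x);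
  smul1 : forall o x, L0_is_one o -> smul o x = x;
  stable_mod : forall A (xs : nat -> E), partition A ->
    exists! x, forall k c, is_ind (A k) c -> smul c x = smul c (xs k)
}.

Section Stable.
Variable M : StableL0Module.
Notation EE := (E M).

(** x = sum_k 1_{A_k} xs_k *)
Definition is_concat (A : nat -> Om -> Prop) (xs : nat -> EE) (x : EE) : Prop :=
  forall k c, is_ind (A k) c -> smul M c x = smul M c (xs k).

Definition stable_set (Y : EE -> Prop) : Prop :=
  (exists y, Y y) /\
  forall A xs x, partition A -> (forall k, Y (xs k)) -> is_concat A xs x -> Y x.

Definition concat_sets (A : nat -> Om -> Prop) (Ys : nat -> EE -> Prop) : EE -> Prop :=
  fun x => exists xs, (forall k, Ys k (xs k)) /\ is_concat A xs x.

Definition stable_coll (C : (EE -> Prop) -> Prop) : Prop :=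
  (exists Y, C Y) /\ (forall Y, C Y -> stable_set Y) /\
  forall A Ys, partition A -> (forall k, C (Ys k)) -> C (concat_sets A Ys).

Definition topology_on (K : EE -> Prop) (T : (EE -> Prop) -> Prop) : Prop :=
  T K /\
  (forall U, T U -> forall x, U x -> K x) /\
  (forall F : (EE -> Prop) -> Prop, (forall U, F U -> T U) ->
      T (fun x => exists U, F U /\ U x)) /\
  (forall U V, T U -> T V -> T (fun x => U x /\ V x)).

Definition is_base (T B : (EE -> Prop) -> Prop) : Prop :=
  (forall b, B b -> T b) /\
  forall U x, T U -> U x -> exists b, B b /\ b x /\ forall y, b y -> U y.

Definition stable_top_space (K : EE -> Prop) (T : (EE -> Prop) -> Prop) : Prop :=
  stable_set K /\ topology_on K T /\ exists B, is_base T B /\ stable_coll B.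

Definition closed_in (K : EE -> Prop) (T : (EE -> Prop) -> Prop) (S : EE -> Prop) : Prop :=
  T (fun x => K x /\ ~ S x).

Definition filter_on (K : EE -> Prop) (F : (EE -> Prop) -> Prop) : Prop :=
  F K /\
  (forall S, F S -> forall x, S x -> K x) /\
  (forall S S', F S -> (forall x, S x -> S' x) -> (forall x, S' x -> K x) -> F S') /\
  (forall S S', F S -> F S' -> F (fun x => S x /\ S' x)) /\
  (forall S, F S -> exists x, S x).

Definition filter_base (F B : (EE -> Prop) -> Prop) : Prop :=
  (forall b, B b -> F b) /\ forall S, F S -> exists b, B b /\ forall x, b x -> S x.

Definition stable_filter (K : EE -> Prop) (F : (EE -> Prop) -> Prop) : Prop :=
  filter_on K F /\ exists B, filter_base F B /\ stable_coll B.

Definition cluster_point (T F : (EE -> Prop) -> Prop) (x : EE) : Prop :=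
  forall U, T U -> U x -> forall S, F S -> exists y, U y /\ S y.

Definition stable_compact (K : EE -> Prop) (T : (EE -> Prop) -> Prop) : Prop :=
  forall F, stable_filter K F -> exists x, K x /\ cluster_point T F x.

(** stable functions K -> L^0 : f(sum 1_{A_k} x_k) = sum 1_{A_k} f(x_k) *)
Definition stable_fun (K : EE -> Prop) (f : EE -> L0) : Prop :=
  forall A xs x, partition A -> (forall k, K (xs k)) -> is_concat A xs x ->
    forall k c a b, is_ind (A k) c ->
      L0_mul_rel c (f x) a -> L0_mul_rel c (f (xs k)) b -> a = b.

Definition lsc (K : EE -> Prop) (T : (EE -> Prop) -> Prop) (f : EE -> L0) : Prop :=
  forall eta : Om -> Rbar, measurable_rbar eta ->
    closed_in K T (fun x => K x /\ L0_le_bar (f x) eta).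

End Stable.
End L0.

(* Main.v *)
Require Import Defs.
From Stdlib Require Import Reals Lra Lia ZArith Classical ClassicalEpsilon FunctionalExtensionality PropExtensionality.
Open Scope R_scope.

Lemma sext {T} (P Q : T -> Prop) : (forall w, P w <-> Q w) -> P = Q.
Proof. intro H; apply functional_extensionality; intro w; apply propositional_extensionality; auto. Qed.

Section Meas.
Variable Ps : ProbSpace.

Lemma meas_empty : meas Ps (fun _ : Omega Ps => False).
Proof.
  replace (fun _ : Omega Ps => False) with (fun w : Omega Ps => ~ (fun _ => True) w).
  - apply meas_compl, meas_full.
  - apply sext; intros; tauto.
Qed.

Lemma meas_union2 (A B : Omega Ps -> Prop) : meas Ps A -> meas Ps B -> meas Ps (fun w => A w \/ B w).
Proof.
  intros HA HB.
  replace (fun w => A w \/ B w) with (fun w => exists n, (match n with O => A | _ => B end) w).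
  - apply meas_union. intros [|n]; auto.
  - apply sext; intro w; split.
    + intros [[|n] H]; auto.
    + intros [H|H]; [exists O | exists 1%nat]; auto.
Qed.

Lemma meas_inter (A B : Omega Ps -> Prop) : meas Ps A -> meas Ps B -> meas Ps (fun w => A w /\ B w).
Proof.
  intros HA HB.
  replace (fun w => A w /\ B w) with (fun w => ~ ((fun w => ~ A w) w \/ (fun w => ~ B w) w)).
  - apply meas_compl, meas_union2; apply meas_compl; auto.
  - apply sext; intro w; split.
    + intro H; destruct (classic (A w)), (classic (B w)); tauto.
    + tauto.
Qed.

Lemma sum_zero n : sum_f_R0 (fun _ => 0) n = 0.
Proof. induction n; simpl; [lra| rewrite IHn; lra]. Qed.

Lemma inf_sum_zero : infinite_sum (fun _ => 0) 0.
Proof. intros eps He. exists O. intros n _. rewrite sum_zero. unfold Rdist. rewrite Rminus_0_r, Rabs_R0. lra. Qed.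

Lemma prob_empty : prob Ps (fun _ => False) = 0.
Proof.
  pose proof (prob_sigma_add Ps (fun _ _ => False) (fun _ => meas_empty) (fun n m w _ H _ => H)) as H.
  replace (fun w : Omega Ps => exists n : nat, (fun _ _ => False) n w) with (fun _ : Omega Ps => False) in H.
  2: apply sext; intros w; split; [tauto| intros [_ []]].
  cbv beta in H. set (p := prob Ps _) in H.
  destruct (Req_dec p 0) as [|Hne]; auto. exfalso.
  assert (Hp: Rabs p / 2 > 0) by (apply Rabs_pos_lt in Hne; lra).
  destruct (H _ Hp) as [N HN].
  pose proof (HN N (le_n _)) as H1; pose proof (HN (S N) (le_S _ _ (le_n _))) as H2.
  simpl sum_f_R0 in H2. unfold Rdist in *.
  set (s := sum_f_R0 _ N) in *.
  split_Rabs; lra.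
Qed.

Lemma prob_add2 (A B : Omega Ps -> Prop) : meas Ps A -> meas Ps B -> (forall w, A w -> B w -> False) ->
  prob Ps (fun w => A w \/ B w) = prob Ps A + prob Ps B.
Proof.
  intros HA HB Hd.
  set (G := fun n => match n with O => A | 1%nat => B | _ => fun _ : Omega Ps => False end).
  assert (HG : forall n, meas Ps (G n)) by (intros [|[|n]]; simpl; auto using meas_empty).
  assert (HGd : forall n m w, n <> m -> G n w -> G m w -> False).
  { intros [|[|n]] [|[|m]] w Hnm; simpl; try tauto; intros; eauto. }
  pose proof (prob_sigma_add Ps G HG HGd) as H.
  replace (fun w => exists n, G n w) with (fun w => A w \/ B w) in H.
  2:{ apply sext; intro w; split.
      - intros [Ha|Hb]; [exists O|exists 1%nat]; auto.
      - intros [[|[|n]] Hn]; simpl in Hn; tauto. }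
  eapply uniqueness_sum; [exact H|].
  assert (Hs: forall n, sum_f_R0 (fun n => prob Ps (G n)) (S n) = prob Ps A + prob Ps B).
  { induction n; simpl; [reflexivity|]. simpl in IHn. rewrite IHn. rewrite prob_empty. lra. }
  intros eps He. exists 1%nat. intros n Hn. destruct n; [lia|]. rewrite Hs. unfold Rdist.
  rewrite Rminus_diag, Rabs_R0. lra.
Qed.

Lemma prob_mono (A B : Omega Ps -> Prop) : meas Ps A -> meas Ps B -> (forall w, A w -> B w) ->
  prob Ps A <= prob Ps B.
Proof.
  intros HA HB Hs.
  replace B with (fun w => A w \/ (fun w => B w /\ ~ A w) w).
  - rewrite prob_add2; auto.
    + pose proof (prob_nonneg Ps (fun w => B w /\ ~ A w)) as H.
      assert (meas Ps (fun w => B w /\ ~ A w)) by (apply meas_inter; auto using meas_compl).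
      specialize (H H0). lra.
    + apply meas_inter; auto using meas_compl.
    + intros w Ha [_ Hn]; tauto.
  - apply sext; intro w; split.
    + intros [H|[H _]]; auto.
    + intro H; destruct (classic (A w)); tauto.
Qed.

Lemma null_sub (A N : Omega Ps -> Prop) : meas Ps A -> meas Ps N -> prob Ps N = 0 ->
  (forall w, A w -> N w) -> prob Ps A = 0.
Proof.
  intros HA HN H0 Hs. pose proof (prob_mono A N HA HN Hs). pose proof (prob_nonneg Ps A HA). lra.
Qed.

Lemma ae_true : ae Ps (fun _ => True).
Proof. exists (fun _ => False). split; [apply meas_empty|split; [apply prob_empty|auto]]. Qed.

Lemma ae_mono (P Q : Omega Ps -> Prop) : ae Ps P -> (forall w, P w -> Q w) -> ae Ps Q.
Proof. intros [N [H1 [H2 H3]]] H. exists N; repeat split; auto. Qed.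

Lemma ae_all (P : nat -> Omega Ps -> Prop) : (forall n, ae Ps (P n)) -> ae Ps (fun w => forall n, P n w).
Proof.
  intros H.
  assert (Hc: forall n, {N | meas Ps N /\ prob Ps N = 0 /\ forall w, ~ N w -> P n w}).
  { intro n. apply constructive_indefinite_description. apply H. }
  set (N := fun n => proj1_sig (Hc n)).
  assert (HN : forall n, meas Ps (N n) /\ prob Ps (N n) = 0 /\ forall w, ~ N n w -> P n w)
    by (intro n; exact (proj2_sig (Hc n))).
  clearbody N.
  set (D := fun n w => N n w /\ ~ (exists m, (m < n)%nat /\ N m w)).
  assert (HDm : forall n, meas Ps (D n)).
  { intro n. apply meas_inter. apply HN. apply meas_compl.
    apply (meas_union Ps (fun m w => (m < n)%nat /\ N m w)). intro m.
    destruct (lt_dec m n) as [Hl|Hl].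
    - replace (fun w => (m < n)%nat /\ N m w) with (N m) by (apply sext; intuition). apply HN.
    - replace (fun w => (m < n)%nat /\ N m w) with (fun _ : Omega Ps => False) by (apply sext; intuition).
      apply meas_empty. }
  assert (HD0 : forall n, prob Ps (D n) = 0).
  { intro n. apply (null_sub _ (N n)); try apply HN; auto. intros w [Hw _]; auto. }
  assert (HU : (fun w => exists n, D n w) = (fun w => exists n, N n w)).
  { apply sext; intro w; split.
    - intros [n [Hn _]]; eauto.
    - intros [n Hn]. revert Hn. induction n as [n IH] using (well_founded_induction lt_wf). intro Hn.
      destruct (classic (exists m, (m < n)%nat /\ N m w)) as [[m [Hm1 Hm2]]|Hno].
      + exact (IH m Hm1 Hm2).
      + exists n; split; auto. }
  assert (Hdisj : forall n m w, n <> m -> D n w -> D m w -> False).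
  { intros n m w Hnm [Hn1 Hn2] [Hm1 Hm2]. destruct (Nat.lt_total n m) as [Hl|[He|Hl]]; eauto. }
  pose proof (prob_sigma_add Ps D HDm Hdisj) as Hs.
  replace (fun n => prob Ps (D n)) with (fun _ : nat => 0) in Hs by (apply functional_extensionality; intro; auto).
  pose proof (uniqueness_sum _ _ _ Hs inf_sum_zero) as Hz.
  rewrite HU in Hz.
  exists (fun w => exists n, N n w). split; [apply meas_union; apply HN|split; [auto|]].
  intros w Hw n. apply HN. intro Hn; apply Hw; eauto.
Qed.

Lemma ae_and (P Q : Omega Ps -> Prop) : ae Ps P -> ae Ps Q -> ae Ps (fun w => P w /\ Q w).
Proof.
  intros HP HQ.
  pose proof (ae_all (fun n => match n with O => P | _ => Q end)) as H.
  eapply ae_mono; [apply H; intros [|n]; auto|]. intros w Hw. split; [apply (Hw O)|apply (Hw 1%nat)].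
Qed.

End Meas.
Section MF.
Variable Ps : ProbSpace.

Lemma meas_cst (c : R) : measurable_fun Ps (fun _ => c).
Proof.
  intro a. destruct (Rle_dec c a) as [H|H].
  - replace (fun _ : Omega Ps => c <= a) with (fun _ : Omega Ps => True) by (apply sext; tauto). apply meas_full.
  - replace (fun _ : Omega Ps => c <= a) with (fun _ : Omega Ps => False) by (apply sext; tauto). apply meas_empty.
Qed.

Definition pw (A : Omega Ps -> Prop) (g h : Omega Ps -> R) (w : Omega Ps) : R :=
  if excluded_middle_informative (A w) then g w else h w.

Lemma meas_pw A g h : meas Ps A -> measurable_fun Ps g -> measurable_fun Ps h -> measurable_fun Ps (pw A g h).
Proof.
  intros HA Hg Hh a.
  replace (fun w => pw A g h w <= a) with
    (fun w => (fun w => A w /\ g w <= a) w \/ (fun w => ~ A w /\ h w <= a) w).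
  - apply meas_union2; apply meas_inter; auto using meas_compl.
  - apply sext; intro w. unfold pw. destruct (excluded_middle_informative (A w)); tauto.
Qed.

Lemma meas_lt (X : Omega Ps -> R) (a : R) : measurable_fun Ps X -> meas Ps (fun w => a < X w).
Proof.
  intro H. replace (fun w => a < X w) with (fun w => ~ (X w <= a)).
  - apply meas_compl, H.
  - apply sext; intro w; split; intro; lra.
Qed.

Lemma dense_q (a b : R) : a < b -> exists m k,
  (a <= INR k / INR (S m) /\ INR k / INR (S m) < b) \/ (a <= - (INR k / INR (S m)) /\ - (INR k / INR (S m)) < b).
Proof.
  intro Hab. destruct (archimed_cor1 (b - a)) as [N [HN HN0]]; [lra|].
  destruct N as [|m]; [lia|]. exists m.
  set (n := INR (S m)) in *.
  assert (Hn : 0 < n) by (apply lt_0_INR; lia).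
  destruct (archimed (a * n)) as [H1 H2].
  set (z := up (a * n)) in *.
  assert (Hq1 : a < IZR z / n).
  { apply (Rmult_lt_reg_r n); auto. unfold Rdiv. rewrite Rmult_assoc, Rinv_l; lra. }
  assert (Hq2 : IZR z / n < b).
  { apply (Rmult_lt_reg_r n); auto. unfold Rdiv. rewrite Rmult_assoc, Rinv_l by lra.
    assert (/ n * n = 1) by (apply Rinv_l; lra).
    assert (1 < (b - a) * n). { replace 1 with (/ n * n) by auto. apply Rmult_lt_compat_r; auto. }
    nra. }
  exists (Z.abs_nat z).
  rewrite INR_IZR_INZ, Zabs2Nat.id_abs.
  destruct (Z.le_ge_cases 0 z) as [Hz|Hz].
  - left. rewrite Z.abs_eq by auto. unfold n in *. split; lra.
  - right. rewrite Z.abs_neq by lia. rewrite opp_IZR. unfold n in *. unfold Rdiv in *. rewrite Ropp_mult_distr_l_reverse, Ropp_involutive. split; lra.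
Qed.

Lemma meas_le2 (X Y : Omega Ps -> R) : measurable_fun Ps X -> measurable_fun Ps Y -> meas Ps (fun w => X w <= Y w).
Proof.
  intros HX HY.
  set (q := fun m k => INR k / INR (S m)).
  replace (fun w => X w <= Y w) with
    (fun w => ~ (exists m, (fun m w => exists k, (fun k w =>
        (fun w => (fun w => Y w <= q m k) w /\ (fun w => q m k < X w) w) w \/
        (fun w => (fun w => Y w <= - q m k) w /\ (fun w => - q m k < X w) w) w) k w) m w)).
  - apply meas_compl. apply meas_union; intro m. apply meas_union; intro k.
    apply meas_union2; apply meas_inter; auto using meas_lt.
  - apply sext; intro w; split.
    + intro H. destruct (Rle_dec (X w) (Y w)) as [Hl|Hl]; auto. exfalso; apply H.
      destruct (dense_q (Y w) (X w)) as [m [k Hk]]; [lra|]. exists m, k. unfold q. lra.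
    + intros H [m [k [[H1 H2]|[H1 H2]]]]; lra.
Qed.

Definition cls (X : Omega Ps -> R) (HX : measurable_fun Ps X) : L0 Ps :=
  exist _ (fun Y => measurable_fun Ps Y /\ ae Ps (fun w => X w = Y w))
    (ex_intro _ X (conj HX (fun Y => iff_refl _))).

Lemma rep_cls X HX : represents Ps (cls X HX) X.
Proof. split; auto. eapply ae_mono; [apply ae_true|auto]. Qed.

Lemma rep_cls_inv X HX Y : represents Ps (cls X HX) Y -> ae Ps (fun w => X w = Y w).
Proof. intros [_ H]; auto. Qed.

Lemma rep_exists (c : L0 Ps) : exists X, represents Ps c X.
Proof.
  destruct (proj2_sig c) as [X [HX HS]]. exists X. apply HS. split; auto.
  eapply ae_mono; [apply ae_true|auto].
Qed.

Lemma rep_meas (c : L0 Ps) X : represents Ps c X -> measurable_fun Ps X.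
Proof. intro H. destruct (proj2_sig c) as [Z [HZ HS]]. apply HS in H. apply H. Qed.

Lemma rep_ae (c : L0 Ps) X Y : represents Ps c X -> represents Ps c Y -> ae Ps (fun w => X w = Y w).
Proof.
  intros H1 H2. destruct (proj2_sig c) as [Z [HZ HS]]. apply HS in H1. apply HS in H2.
  eapply ae_mono; [apply (ae_and _ _ _ (proj2 H1) (proj2 H2))|]. intros w [a b]; congruence.
Qed.

Lemma le_reps (c d : L0 Ps) X Y : L0_le Ps c d -> represents Ps c X -> represents Ps d Y -> ae Ps (fun w => X w <= Y w).
Proof.
  intros [X' [Y' [H1 [H2 H3]]]] HX HY.
  pose proof (rep_ae _ _ _ HX H1). pose proof (rep_ae _ _ _ HY H2).
  eapply ae_mono; [apply (ae_and _ _ _ H3 (ae_and _ _ _ H H0))|]. intros w [a [b e]]. rewrite b, e; auto.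
Qed.

End MF.
Section Main.
Variable Ps : ProbSpace.
Variable M : StableL0Module Ps.
Variable K : E Ps M -> Prop.
Variable f : E Ps M -> L0 Ps.
Hypothesis HKs : stable_set Ps M K.
Hypothesis Hsf : stable_fun Ps M K f.

Definition Sy (y : E Ps M) : E Ps M -> Prop := fun x => K x /\ L0_le Ps (f x) (f y).

Lemma piece A xs x k X Xk : partition Ps A -> (forall k, K (xs k)) -> is_concat Ps M A xs x ->
  represents Ps (f x) X -> represents Ps (f (xs k)) Xk -> ae Ps (fun w => A k w -> X w = Xk w).
Proof.
  intros HA HK Hc HX HXk.
  assert (HAk : meas Ps (A k)) by apply HA.
  set (I := pw Ps (A k) (fun _ => 1) (fun _ => 0)).
  assert (HI : measurable_fun Ps I) by (apply meas_pw; auto using meas_cst).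
  assert (Hm1 : measurable_fun Ps (pw Ps (A k) X (fun _ => 0)))
    by (apply meas_pw; eauto using meas_cst, rep_meas).
  assert (Hm2 : measurable_fun Ps (pw Ps (A k) Xk (fun _ => 0)))
    by (apply meas_pw; eauto using meas_cst, rep_meas).
  assert (Heq : cls Ps _ Hm1 = cls Ps _ Hm2).
  { eapply (Hsf A xs x HA HK Hc k (cls Ps I HI)).
    - exists I. split; [apply rep_cls|]. intro w; unfold I, pw.
      destruct excluded_middle_informative; tauto.
    - exists I, X, (pw Ps (A k) X (fun _ => 0)).
      split; [apply rep_cls| split; [auto| split; [apply rep_cls|]]].
      intro w; unfold I, pw; destruct excluded_middle_informative; ring.
    - exists I, Xk, (pw Ps (A k) Xk (fun _ => 0)).
      split; [apply rep_cls| split; [auto| split; [apply rep_cls|]]].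
      intro w; unfold I, pw; destruct excluded_middle_informative; ring. }
  pose proof (rep_cls Ps _ Hm1) as H. rewrite Heq in H. apply rep_cls_inv in H.
  eapply ae_mono; [exact H|]. intros w Hw Hk. unfold pw in Hw.
  destruct excluded_middle_informative; [auto|contradiction].
Qed.

Definition P2 (A : Omega Ps -> Prop) : nat -> Omega Ps -> Prop :=
  fun n => match n with O => A | 1%nat => fun w => ~ A w | _ => fun _ => False end.

Definition two (u v : E Ps M) : nat -> E Ps M := fun n => match n with O => u | _ => v end.

Lemma P2_part A : meas Ps A -> partition Ps (P2 A).
Proof.
  intro HA. split; [|split].
  - intros [|[|n]]; simpl; auto using meas_compl, meas_empty.
  - intros [|[|n]] [|[|m]] w Hnm; simpl; try tauto; intros; eauto.
  - intro w. destruct (classic (A w)); [exists O | exists 1%nat]; simpl; auto.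
Qed.

Lemma concat_ex A xs : partition Ps A -> (forall k, K (xs k)) -> exists x, K x /\ is_concat Ps M A xs x.
Proof.
  intros HA HK. destruct (stable_mod Ps M A xs HA) as [x [Hx _]]. exists x. split; [|exact Hx].
  eapply (proj2 HKs); eauto.
Qed.

Lemma glue A u v : meas Ps A -> K u -> K v -> exists z, K z /\
  is_concat Ps M (P2 A) (two u v) z /\
  forall Z U V, represents Ps (f z) Z -> represents Ps (f u) U -> represents Ps (f v) V ->
   ae Ps (fun w => (A w -> Z w = U w) /\ (~ A w -> Z w = V w)).
Proof.
  intros HA Hu Hv.
  assert (HK2 : forall k, K (two u v k)) by (intros [|k]; simpl; auto).
  destruct (concat_ex (P2 A) (two u v) (P2_part A HA) HK2) as [z [Hz Hc]].
  exists z. split; [auto|split; [auto|]]. intros Z U V HZ HU HV.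
  pose proof (piece (P2 A) (two u v) z O Z U (P2_part A HA) HK2 Hc HZ HU) as H0.
  pose proof (piece (P2 A) (two u v) z 1%nat Z V (P2_part A HA) HK2 Hc HZ HV) as H1.
  eapply ae_mono; [apply (ae_and _ _ _ H0 H1)|]. simpl. tauto.
Qed.

Lemma combine A X Y : partition Ps A -> (forall k, ae Ps (fun w => A k w -> X w <= Y w)) ->
  ae Ps (fun w => X w <= Y w).
Proof.
  intros HA H. eapply ae_mono; [apply (ae_all _ _ H)|]. intros w Hw.
  destruct (proj2 (proj2 HA) w) as [k Hk]. exact (Hw k Hk).
Qed.

Lemma L0_le_intro c d X Y : represents Ps c X -> represents Ps d Y -> ae Ps (fun w => X w <= Y w) -> L0_le Ps c d.
Proof. intros. exists X, Y; auto. Qed.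

Lemma min_lemma y1 y2 : K y1 -> K y2 -> exists y, K y /\ (forall x, Sy y x -> Sy y1 x) /\ (forall x, Sy y x -> Sy y2 x).
Proof.
  intros H1 H2.
  destruct (rep_exists Ps (f y1)) as [Y1 HY1]. destruct (rep_exists Ps (f y2)) as [Y2 HY2].
  assert (HA : meas Ps (fun w => Y1 w <= Y2 w)) by (apply meas_le2; eauto using rep_meas).
  destruct (glue _ y1 y2 HA H1 H2) as [z [Hz [_ Hs]]].
  destruct (rep_exists Ps (f z)) as [Z HZ].
  specialize (Hs Z Y1 Y2 HZ HY1 HY2).
  exists z. split; [auto|split]; intros x [Hx Hle]; split; auto;
    destruct (rep_exists Ps (f x)) as [X HX]; pose proof (le_reps _ _ _ _ _ Hle HX HZ) as H.
  - apply (L0_le_intro _ _ X Y1); auto. eapply ae_mono; [apply (ae_and _ _ _ H Hs)|].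
    intros w [a [b c]]. destruct (Rle_dec (Y1 w) (Y2 w)) as [d|d].
    + rewrite <- b; auto. + specialize (c d). lra.
  - apply (L0_le_intro _ _ X Y2); auto. eapply ae_mono; [apply (ae_and _ _ _ H Hs)|].
    intros w [a [b c]]. destruct (Rle_dec (Y1 w) (Y2 w)) as [d|d].
    + specialize (b d). lra. + rewrite <- c; auto.
Qed.

Lemma Sy_refl y : K y -> Sy y y.
Proof.
  intro H. split; auto. destruct (rep_exists Ps (f y)) as [Y HY]. apply (L0_le_intro _ _ Y Y); auto.
  eapply ae_mono; [apply ae_true|]. intros; lra.
Qed.

Lemma Sy_stable y : K y -> stable_set Ps M (Sy y).
Proof.
  intro Hy. split; [exists y; apply Sy_refl; auto|].
  intros A xs x HA Hxs Hc. split; [eapply (proj2 HKs); eauto; intro k; apply Hxs|].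
  destruct (rep_exists Ps (f x)) as [X HX]. destruct (rep_exists Ps (f y)) as [Y HY].
  apply (L0_le_intro _ _ X Y); auto. apply (combine A); auto. intro k.
  destruct (rep_exists Ps (f (xs k))) as [Xk HXk].
  pose proof (piece A xs x k X Xk HA (fun k => proj1 (Hxs k)) Hc HX HXk) as H1.
  pose proof (le_reps _ _ _ _ _ (proj2 (Hxs k)) HXk HY) as H2.
  eapply ae_mono; [apply (ae_and _ _ _ H1 H2)|]. intros w [a b] c. rewrite a; auto.
Qed.

Lemma concat_Sy A ys y : partition Ps A -> (forall k, K (ys k)) -> is_concat Ps M A ys y ->
  concat_sets Ps M A (fun k => Sy (ys k)) = Sy y.
Proof.
  intros HA HK Hc. apply sext; intro x; split.
  - intros [xs [Hxs Hcx]]. split; [apply (proj2 HKs A xs x HA (fun k => proj1 (Hxs k)) Hcx)|].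
    destruct (rep_exists Ps (f x)) as [X HX]. destruct (rep_exists Ps (f y)) as [Y HY].
    apply (L0_le_intro _ _ X Y); auto. apply (combine A); auto. intro k.
    destruct (rep_exists Ps (f (xs k))) as [Xk HXk]. destruct (rep_exists Ps (f (ys k))) as [Yk HYk].
    pose proof (piece A xs x k X Xk HA (fun k => proj1 (Hxs k)) Hcx HX HXk) as H1.
    pose proof (piece A ys y k Y Yk HA HK Hc HY HYk) as H2.
    pose proof (le_reps _ _ _ _ _ (proj2 (Hxs k)) HXk HYk) as H3.
    eapply ae_mono; [apply (ae_and _ _ _ H1 (ae_and _ _ _ H2 H3))|].
    intros w [a [b c]] d. rewrite a, b; auto.
  - intros [Hx Hle].
    assert (Hz : forall k, {z | K z /\ is_concat Ps M (P2 (A k)) (two x (ys k)) z /\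
       forall Z U V, represents Ps (f z) Z -> represents Ps (f x) U -> represents Ps (f (ys k)) V ->
       ae Ps (fun w => (A k w -> Z w = U w) /\ (~ A k w -> Z w = V w))}).
    { intro k. apply constructive_indefinite_description. apply glue; auto. apply HA. }
    exists (fun k => proj1_sig (Hz k)). split.
    + intro k. destruct (proj2_sig (Hz k)) as [Hzk [_ Hs]]. set (z := proj1_sig (Hz k)) in *. split; auto.
      destruct (rep_exists Ps (f z)) as [Z HZ]. destruct (rep_exists Ps (f x)) as [X HX].
      destruct (rep_exists Ps (f y)) as [Y HY]. destruct (rep_exists Ps (f (ys k))) as [Yk HYk].
      apply (L0_le_intro _ _ Z Yk); auto.
      pose proof (Hs Z X Yk HZ HX HYk) as H1.
      pose proof (piece A ys y k Y Yk HA HK Hc HY HYk) as H2.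
      pose proof (le_reps _ _ _ _ _ Hle HX HY) as H3.
      eapply ae_mono; [apply (ae_and _ _ _ H1 (ae_and _ _ _ H2 H3))|].
      intros w [[a b] [c d]]. destruct (classic (A k w)) as [e|e].
      * rewrite a, <- c; auto. * rewrite b; auto; lra.
    + intros k c Hck. destruct (proj2_sig (Hz k)) as [_ [Hcz _]].
      symmetry. exact (Hcz O c Hck).
Qed.

End Main.

Theorem theorem5 (Ps : ProbSpace) (M : StableL0Module Ps)
  (K : E Ps M -> Prop) (T : (E Ps M -> Prop) -> Prop) (f : E Ps M -> L0 Ps) :
  stable_top_space Ps M K T ->
  stable_fun Ps M K f ->
  lsc Ps M K T f ->
  stable_compact Ps M K T ->
  exists x0, K x0 /\ forall x, K x -> L0_le Ps (f x0) (f x).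
Proof.
  intros [HKs [Htop _]] Hsf Hlsc Hcomp.
  set (F := fun S : E Ps M -> Prop => (forall x, S x -> K x) /\ exists y, K y /\ forall x, Sy Ps M K f y x -> S x).
  set (B := fun b : E Ps M -> Prop => exists y, K y /\ b = Sy Ps M K f y).
  destruct (proj1 HKs) as [y0 Hy0].
  assert (HF : stable_filter Ps M K F).
  { split; [split; [|split; [|split; [|split]]]|].
    - split; auto. exists y0; split; auto. intros x []; auto.
    - intros S [H _]; auto.
    - intros S S' [_ [y [Hy H]]] Hs HK; split; auto. exists y; split; auto.
    - intros S S' [H1 [y1 [Hy1 H1']]] [H2 [y2 [Hy2 H2']]]. split; [intros x [a _]; auto|].
      destruct (min_lemma Ps M K f HKs Hsf y1 y2 Hy1 Hy2) as [y [Hy [Ha Hb]]].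
      exists y; split; auto.
    - intros S [_ [y [Hy H]]]. exists y. apply H, Sy_refl; auto.
    - exists B. split; [split|].
      + intros b [y [Hy ->]]. split; [intros x []; auto|]. exists y; auto.
      + intros S [HS [y [Hy H]]]. exists (Sy Ps M K f y). split; [exists y; auto|auto].
      + split; [exists (Sy Ps M K f y0); exists y0; auto|split].
        * intros b [y [Hy ->]]. apply Sy_stable; auto.
        * intros A Ys HA HYs.
          assert (Hc : forall k, {y | K y /\ Ys k = Sy Ps M K f y}).
          { intro k. apply constructive_indefinite_description. apply HYs. }
          set (ys := fun k => proj1_sig (Hc k)).
          assert (Hys : forall k, K (ys k) /\ Ys k = Sy Ps M K f (ys k)) by (intro k; exact (proj2_sig (Hc k))).
          clearbody ys.
          replace Ys with (fun k => Sy Ps M K f (ys k)) by (apply functional_extensionality; intro k; symmetry; apply Hys).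
          destruct (concat_ex Ps M K HKs A ys HA (fun k => proj1 (Hys k))) as [y [Hy Hcy]].
          exists y. split; auto. apply concat_Sy; auto. intro k; apply Hys. }
  destruct (Hcomp F HF) as [x0 [Hx0 Hcl]].
  exists x0. split; auto. intros y Hy.
  destruct (classic (L0_le Ps (f x0) (f y))) as [H|H]; auto. exfalso.
  destruct (rep_exists Ps (f y)) as [Y HY].
  assert (Hm : measurable_rbar Ps (fun w => Finite (Y w))).
  { intro a. simpl. apply (rep_meas Ps (f y)); auto. }
  pose proof (Hlsc _ Hm) as Hc. unfold closed_in in Hc.
  assert (Hu : (fun x => K x /\ ~ (K x /\ L0_le_bar Ps (f x) (fun w => Finite (Y w)))) x0).
  { split; auto. intros [_ [X [HX Hae]]]. apply H. apply (L0_le_intro _ _ _ X Y); auto. }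
  assert (HS : F (Sy Ps M K f y)).
  { split; [intros x []; auto|]. exists y; split; auto. }
  destruct (Hcl _ Hc Hu _ HS) as [w [[Hw1 Hw2] [Hw3 Hw4]]].
  - apply Hw2. split; auto. destruct Hw4 as [X' [Y' [HX' [HY' Hae]]]].
    exists X'. split; auto. pose proof (rep_ae _ _ _ _ HY' HY) as He.
    eapply ae_mono; [apply (ae_and _ _ _ Hae He)|]. intros v [a b]. simpl. rewrite <- b; auto.
Qed.
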